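(* Consider the Boosted HiPPA setting described in the context, with $\gamma>0$, $\sigma\in(0,\frac1{p\gamma})$, $\vartheta\in(0,1)$, and let $x^k$ be an iterate generated by the algorithm, with direction $d^k\in\mathbb{R}^n$. If $P_k(x^k)\neq x^k$, then there exists $\bar m\in\mathbb{N}_0$ such that, with $\alpha_k=\vartheta^{\bar m}$ and $\hat x^{k+1}=(1-\alpha_k)P_k(x^k)+\alpha_k(x^k+d^k)$, the inequality $$\varphi^{p,\varepsilon_{k+1}}_\gamma(\hat x^{k+1})\le\varphi^{p,\varepsilon_k}_\gamma(x^k)-\sigma\|R^{\varepsilon_k}_\gamma(x^k)\|^p+\varepsilon_k+\varepsilon_{k+1}$$ holds; consequently the backtracking loop terminates after finitely many steps.
   Context: Standing setting. $p>1$; $\varphi:\mathbb{R}^n\to\mathbb{R}\cup\{+\infty\}$ is proper, lsc and bounded from below. For $\gamma>0$: $\operatorname{prox}^p_{\gamma\varphi}(x):=\operatorname{argmin}_y\big(\varphi(y)+\frac1{p\gamma}\|x-y\|^p\big)$, $\varphi^p_\gamma(x):=\inf_y\big(\varphi(y)+\frac1{p\gamma}\|x-y\|^p\big)$. $\{\varepsilon_k\}_{k\ge0},\{\delta_k\}_{k\ge0}$ are non-increasing sequences of positive scalars with $\sum_k\varepsilon_k<\infty$ and $\delta_k\downarrow0$. Prox approximation: for each index $j$ and each point $x$ needed by the algorithm, a point $P_j(x)$ (written $\operatorname{prox}^{p,\varepsilon_j}_{\gamma\varphi}(x)$) is available with $\operatorname{dist}(P_j(x),\operatorname{prox}^p_{\gamma\varphi}(x))<\delta_j$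 and $\varphi(P_j(x))+\frac1{p\gamma}\|x-P_j(x)\|^p<\varphi^p_\gamma(x)+\varepsilon_j$. Define $\varphi^{p,\varepsilon_j}_\gamma(x):=\varphi(P_j(x))+\frac1{p\gamma}\|x-P_j(x)\|^p$ and $R^{\varepsilon_j}_\gamma(x):=x-P_j(x)$. Boosted HiPPA: choose $x^0$, $\gamma>0$, $\sigma\in(0,\frac1{p\gamma})$, $\vartheta\in(0,1)$. At iteration $k$: set $\bar x^k:=P_k(x^k)$; choose a direction $d^k\in\mathbb{R}^n$ (not necessarily a descent direction); for $m=0,1,2,\dots$ set $\alpha_k=\vartheta^m$, $\hat x^{k+1}=(1-\alpha_k)\bar x^k+\alpha_k(x^k+d^k)$, until $\varphi^{p,\varepsilon_{k+1}}_\gamma(\hat x^{k+1})\le\varphi^{p,\varepsilon_k}_\gamma(x^k)-\sigma\|R^{\varepsilon_k}_\gamma(x^k)\|^p+\varepsilon_k+\varepsilon_{k+1}$; then set $x^{k+1}=\hat x^{k+1}$. *)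

(* Defs.v *)
From HB Require Import structures.
From mathcomp Require Import all_boot all_order all_algebra.
From mathcomp Require Import all_classical all_reals all_analysis.
Set Implicit Arguments. Unset Strict Implicit. Unset Printing Implicit Defensive.
Import Order.TTheory GRing.Theory Num.Theory.
Import numFieldNormedType.Exports.
Local Open Scope classical_set_scope.
Local Open Scope ring_scope.

Section HiPPA.
Variables (R : realType) (n : nat).

Definition enorm (x : 'rV[R]_n) : R := Num.sqrt (\sum_(i < n) (x ord0 i) ^+ 2).

Definition pen (p gam : R) (x y : 'rV[R]_n) : R :=
  (1 / (p * gam)) * (enorm (x - y)) `^ p.

Definition envelope (phi : 'rV[R]_n -> \bar R) (p gam : R) (x : 'rV[R]_n) : \bar R :=
  ereal_inf [set (phi y + (pen p gam x y)%:E)%E | y in [set: 'rV[R]_n]].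

Definition prox (phi : 'rV[R]_n -> \bar R) (p gam : R) (x : 'rV[R]_n) : set 'rV[R]_n :=
  [set y | forall z, (phi y + (pen p gam x y)%:E <= phi z + (pen p gam x z)%:E)%E].

Definition dist_to_set (y : 'rV[R]_n) (S : set 'rV[R]_n) : R :=
  inf [set enorm (y - z) | z in S].

Definition approx_env (phi : 'rV[R]_n -> \bar R) (p gam : R)
  (P : nat -> 'rV[R]_n -> 'rV[R]_n) (j : nat) (x : 'rV[R]_n) : \bar R :=
  (phi (P j x) + (pen p gam x (P j x))%:E)%E.

Definition resid (P : nat -> 'rV[R]_n -> 'rV[R]_n) (j : nat) (x : 'rV[R]_n) : 'rV[R]_n :=
  x - P j x.

Definition accept (phi : 'rV[R]_n -> \bar R) (p gam sig vth : R) (eps : nat -> R)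
  (P : nat -> 'rV[R]_n -> 'rV[R]_n) (k : nat) (xk dk : 'rV[R]_n) (m : nat) : Prop :=
  let a := vth ^+ m in
  let xhat := (1 - a) *: P k xk + a *: (xk + dk) in
  (approx_env phi p gam P k.+1 xhat <=
     approx_env phi p gam P k xk - (sig * (enorm (resid P k xk)) `^ p)%:E
     + (eps k)%:E + (eps k.+1)%:E)%E.

End HiPPA.

(* Main.v *)
Require Import Defs.
From HB Require Import structures.
From mathcomp Require Import all_boot all_order all_algebra.
From mathcomp Require Import all_classical all_reals all_analysis.
Import Order.TTheory GRing.Theory Num.Theory.
Import numFieldNormedType.Exports.
Local Open Scope classical_set_scope.
Local Open Scope ring_scope.

From mathcomp Require Import lra.

Lemma enormZ (R : realType) (n : nat) (a : R) (v : 'rV[R]_n) :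
  0 <= a -> enorm (a *: v) = a * enorm v.
Proof.
move=> a0; rewrite /enorm.
under eq_bigr => i _ do rewrite mxE exprMn.
by rewrite -mulr_sumr sqrtrM ?sqr_ge0 // sqrtr_sqr ger0_norm.
Qed.

Lemma aux_ineq (R : realFieldType) (r A e0 e1 B S : R) :
  A <= e0 -> S <= B -> r + A + e1 <= r + B - S + e0 + e1.
Proof. move=> *; lra. Qed.

Theorem theorem9 (R : realType) (n : nat) (phi : 'rV[R]_n -> \bar R)
  (p gam sig vth : R) (eps delta : nat -> R)
  (P : nat -> 'rV[R]_n -> 'rV[R]_n) (k : nat) (xk dk : 'rV[R]_n) :
  1 < p ->
  (* phi : R^n -> R u {+oo} proper, lsc, bounded from below *)
  (forall x, phi x != -oo%E) -> (exists x, phi x != +oo%E) ->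
  lower_semicontinuous phi ->
  (exists c : R, forall x, (c%:E <= phi x)%E) ->
  (* eps, delta : non-increasing positive, sum eps < oo, delta -> 0 *)
  (forall j, 0 < eps j) -> (forall j, eps j.+1 <= eps j) -> cvgn (series eps) ->
  (forall j, 0 < delta j) -> (forall j, delta j.+1 <= delta j) -> delta @ \oo --> 0 ->
  (* parameters *)
  0 < gam -> 0 < sig -> sig < 1 / (p * gam) -> 0 < vth -> vth < 1 ->
  (* inexact prox oracle *)
  (forall j x, dist_to_set (P j x) (prox phi p gam x) < delta j /\
               (approx_env phi p gam P j x < envelope phi p gam x + (eps j)%:E)%E) ->
  P k xk != xk ->
  exists mbar : nat,
    accept phi p gam sig vth eps P k xk dk mbar /\
    (forall m, (m < mbar)%N -> ~ accept phi p gam sig vth eps P k xk dk m).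
Proof.
move=> p1 phiNy _ _ _ eps0 _ _ _ _ _ gam0 sig0 sigu vth0 vth1 orc _.
set y := P k xk.
set v := xk + dk - y.
set N := enorm v.
have pg0 : 0 < p * gam by apply: mulr_gt0 => //; lra.
set c := eps k * (p * gam) / (N `^ p + 1).
have c0 : 0 < c.
  apply: divr_gt0; first exact: mulr_gt0.
  have := powR_ge0 N p; lra.
have nv : `|vth| < 1 by rewrite ger0_norm ?ltW.
have [M _ HM] := cvgr_lt _ (cvg_expr nv) _ c0.
have hM : vth ^+ M < c by exact: (HM M (leqnn M)).
have accM : accept phi p gam sig vth eps P k xk dk M.
  rewrite /accept /approx_env /resid -/y.
  set a := vth ^+ M.
  set xhat := (1 - a) *: y + a *: (xk + dk).
  have a0 : 0 < a by apply: exprn_gt0.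
  have a1 : a <= 1 by apply: exprn_ile1; apply: ltW.
  have ha : xhat - y = a *: v.
    rewrite /xhat /v scalerBl scale1r scalerBr; set A := a *: (xk + dk); set B := a *: y.
    by rewrite addrAC [y - B]addrC addrK addrC.
  have hpen : pen p gam xhat y <= eps k.
    rewrite /pen ha enormZ; last exact: ltW.
    rewrite powRM; [|exact: ltW|by rewrite /enorm sqrtr_ge0].
    have hap : a `^ p <= a by apply: ge1r_powR; [rewrite a0 a1 | apply: ltW].
    have Np0 := powR_ge0 N p.
    have h1 : a `^ p * N `^ p <= c * N `^ p.
      apply: ler_wpM2r => //; apply: le_trans hap _; exact: ltW.
    have h2 : c * N `^ p <= eps k * (p * gam).
      rewrite /c mulrAC ler_pdivrMr; last lra.
      have := eps0 k; nra.
    have h3 : 1 / (p * gam) * (a `^ p * N `^ p) <= 1 / (p * gam) * (eps k * (p * gam)).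
      apply: ler_wpM2l; last lra.
      by rewrite divr_ge0 // ltW.
    apply: le_trans h3 _.
    by rewrite mul1r mulrCA mulVf ?mulr1 // gt_eqF.
  have [_ H1] := orc k.+1 xhat.
  have H2 : (envelope phi p gam xhat <= phi y + (pen p gam xhat y)%:E)%E.
    by apply: ereal_inf_lbound; exists y.
  move: (phiNy y) H1 H2.
  case: (phi y) => [r| |] //= _ H1 H2; last by rewrite ?addye ?leey.
  apply: (le_trans (ltW H1)).
  apply: (le_trans (leeD2r _ H2)).
  rewrite -!(EFinN, EFinD) lee_fin.
  set X := enorm (xk - y) `^ p.
  have X0 : 0 <= X by apply: powR_ge0.
  apply: aux_ineq; first exact: hpen.
  by apply: ler_wpM2r => //; apply: ltW.
pose Q := fun m => `[< accept phi p gam sig vth eps P k xk dk m >].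
have exQ : exists m, Q m by exists M; apply/asboolP.
case: (ex_minnP exQ) => mb /asboolP Qmb minm.
exists mb; split=> // m hm am.
have := minm m (asboolT am); rewrite leqNgt hm //.
Qed.
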